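(* Let $m\in\mathbb N^+$, let $\mathcal N$ be a set of monomials of degree $m$ in $X$ and $Y$, and let $I=\langle X^m,Y^m,\mathcal N\rangle\subseteq R$. Suppose that $I=\mathfrak a\cdot\mathfrak b$ for some $\mathfrak a,\mathfrak b\in\mathcal I(R)\setminus\{R\}$, and put $d=\operatorname{mdeg}(\mathfrak a)$, $e=\operatorname{mdeg}(\mathfrak b)$, $r=\dim_K\mathfrak a_K[d]$, $s=\dim_K\mathfrak b_K[e]$. Then: (i) $m=d+e$ and $I_K[m]=\mathfrak a_K[d]\cdot\mathfrak b_K[e]$; (ii) $d\ge1$ and $e\ge1$; (iii) $r\ge2$ and $\mathfrak a_K[d]$ has a $K$-basis $\{f_1,\dots,f_r\}$ with $X^d=\operatorname{in}(f_1)>\operatorname{in}(f_2)>\dots>\operatorname{in}(f_r)$; likewise $s\ge 2$ and $\mathfrak b_K[e]$ has a $K$-basis $\{g_1,\dots,g_s\}$ with $X^e=\operatorname{in}(g_1)>\dots>\operatorname{in}(g_s)$; (iv) for every $j\in[2,r]$ there is $a_j\in[1,d]$ with $\operatorname{in}(f_j)=X^{d-a_j}Y^{a_j}$, and for every $k\in[2,s]$ there is $b_k\in[1,e]$ with $\operatorname{in}(g_k)=X^{e-b_k}Y^{b_k}$; (v) setting $a_1=b_1=0$, for every $j\in[1,r]$ and $k\in[1,s]$ we have $X^{m-(a_j+b_k)}Y^{a_j+b_k}\in\{X^m,Y^m\}\cup\mathcal N$.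
   Context: Let $D$ be an integral domain with quotient field $K$, $N\ge 2$, $R=D[X_1,\dots,X_N]$, $S=K[X_1,\dots,X_N]$, and write $X=X_1$, $Y=X_2$. $\mathcal I(R)$ denotes the monoid of nonzero ideals of $R$ under ideal multiplication (identity $R$; its only unit is $R$). Standing assumption: $\mathcal I(R)$ is a BF-monoid (every element is a product of atoms and has finitely many factorization lengths). For $[x,y]$ with integers $x\le y$ we mean $\{z\in\mathbb Z: x\le z\le y\}$. With the standard grading, every $f\in S$ is uniquely $f=\sum_{t\ge0}f_t$ with $f_t$ homogeneous of degree $t$; the min-degree $\operatorname{mdeg}(f)$ of $f\ne0$ is the least $t$ with $f_t\ne0$, and for a nonzero ideal $J$ of $R$, $\operatorname{mdeg}(J)$ is the least min-degree of a nonzero element of $J$. For $J\in\mathcal I(R)$ and $i\in\mathbb N$, $J[i]=\{f_i: f\in J\}$ and $J_K[i]$ is the $K$-linear span of $J[i]$ in $S$; the product $V\cdot W$ of two such spaces is the $K$-span of all products. $\operatorname{in}(f)$ is the largest monomial occurring in $f$ with nonzero coefficient for the lexicographic order with $X_1>X_2>\dots>X_N$. *)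

(* Defs.v *)
From mathcomp Require Import all_boot all_algebra.
From mathcomp Require Import fraction.
From mathcomp Require Export mpoly.

Set Implicit Arguments.
Unset Strict Implicit.
Unset Printing Implicit Defensive.

Import GRing.Theory.
Local Open Scope ring_scope.

Section Ideals.
Variable A : comNzRingType.

Definition is_ideal (I : A -> Prop) : Prop :=
  [/\ I 0, (forall x y, I x -> I y -> I (x + y)) &
      (forall r x, I x -> I (r * x))].

(* element of the monoid I(A) : a nonzero ideal *)
Definition nonzero_ideal (I : A -> Prop) : Prop :=
  is_ideal I /\ exists f, I f /\ f != 0.

Definition ideal_eq (I J : A -> Prop) : Prop := forall x, I x <-> J x.

Definition unit_ideal : A -> Prop := fun _ => True.

Definition gen_ideal (G : A -> Prop) : A -> Prop := fun f =>
  exists (rs gs : seq A), size rs = size gs /\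
    (forall g, g \in gs -> G g) /\
    f = \sum_(i < size gs) rs`_i * gs`_i.

Definition ideal_mul (I J : A -> Prop) : A -> Prop :=
  gen_ideal (fun h => exists a b, I a /\ J b /\ h = a * b).

Definition ideal_prod (l : seq (A -> Prop)) : A -> Prop :=
  foldr ideal_mul unit_ideal l.

(* atoms of the monoid I(A) (whose only unit is A itself) *)
Definition ideal_atom (I : A -> Prop) : Prop :=
  [/\ nonzero_ideal I, ~ ideal_eq I unit_ideal &
      forall J K, nonzero_ideal J -> nonzero_ideal K ->
        ideal_eq I (ideal_mul J K) ->
        ideal_eq J unit_ideal \/ ideal_eq K unit_ideal].

Definition is_factorization (I : A -> Prop) (l : seq (A -> Prop)) : Prop :=
  (forall k, (k < size l)%N -> ideal_atom (nth unit_ideal l k)) /\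
  ideal_eq I (ideal_prod l).

(* I(A) is a BF-monoid: every element is a product of atoms and the set
   of factorization lengths is finite (equivalently, bounded). *)
Definition BF_ideals : Prop :=
  forall I, nonzero_ideal I ->
    (exists l, is_factorization I l) /\
    (exists B : nat, forall l, is_factorization I l -> (size l <= B)%N).

End Ideals.

Section Grading.
Variables (R : nzRingType) (N : nat).

Definition hcomp (f : {mpoly R[N]}) (t : nat) : {mpoly R[N]} :=
  \sum_(mm <- msupp f | mdeg mm == t) f@_mm *: 'X_[mm].

(* min-degree of a nonzero polynomial: mindeg f t <-> mdeg(f) = t *)
Definition mindeg (f : {mpoly R[N]}) (t : nat) : Prop :=
  f != 0 /\ hcomp f t != 0 /\ (forall t', (t' < t)%N -> hcomp f t' = 0).

(* is_mdeg J d <-> mdeg(J) = d for a nonzero ideal J *)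
Definition is_mdeg (J : {mpoly R[N]} -> Prop) (d : nat) : Prop :=
  (exists f, [/\ J f, f != 0 & mindeg f d]) /\
  (forall f t, J f -> f != 0 -> mindeg f t -> (d <= t)%N).

(* lexicographic order on monomials with X_1 > X_2 > ... > X_N *)
Definition lexlt (m1 m2 : 'X_{1..N}) : bool :=
  [exists i : 'I_N, [forall j : 'I_N, (j < i)%N ==> (m1 j == m2 j)]
                     && (m1 i < m2 i)%N].

(* in(f): the lex-largest monomial of f (f <> 0) *)
Definition inm (f : {mpoly R[N]}) : 'X_{1..N} :=
  foldr (fun mm acc => if lexlt acc mm then mm else acc) 0%MM (msupp f).

End Grading.

Section Span.
Variables (K : fieldType) (N : nat).
Local Notation S := {mpoly K[N]}.

Definition kspan (V : S -> Prop) : S -> Prop := fun g =>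
  exists (cs : seq K) (vs : seq S), size cs = size vs /\
    (forall v, v \in vs -> V v) /\
    g = \sum_(i < size vs) cs`_i *: vs`_i.

Definition spmul (V W : S -> Prop) : S -> Prop :=
  kspan (fun h => exists v w, V v /\ W w /\ h = v * w).

Definition lin_indep (bs : seq S) : Prop :=
  forall cs : seq K, size cs = size bs ->
    \sum_(i < size bs) cs`_i *: bs`_i = 0 ->
    forall i, (i < size bs)%N -> cs`_i = 0.

Definition is_basis (V : S -> Prop) (bs : seq S) : Prop :=
  [/\ forall b, b \in bs -> V b, lin_indep bs &
      forall v, V v -> exists cs : seq K, size cs = size bs /\
        v = \sum_(i < size bs) cs`_i *: bs`_i].

Definition is_dim (V : S -> Prop) (r : nat) : Prop :=
  exists bs, size bs = r /\ is_basis V bs.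

End Span.

(* R = D[X_1..X_N] and S = K[X_1..X_N] with K = {fraction D}, N = n.+2. *)
Section Ext.
Variables (D : idomainType) (n : nat).

Definition extK (f : {mpoly D[n.+2]}) : {mpoly {fraction D}[n.+2]} :=
  map_mpoly (@FracField.tofrac D) f.

Definition JK (J : {mpoly D[n.+2]} -> Prop) (i : nat)
  : {mpoly {fraction D}[n.+2]} -> Prop :=
  kspan (fun g => exists f, J f /\ g = extK (hcomp f i)).

End Ext.

Definition varX (R : nzRingType) (n : nat) : {mpoly R[n.+2]} :=
  'X_(@Ordinal n.+2 0 isT).
Definition varY (R : nzRingType) (n : nat) : {mpoly R[n.+2]} :=
  'X_(@Ordinal n.+2 1 isT).

(* Main.v *)
Require Import Defs.
From mathcomp Require Import all_boot all_algebra.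
From mathcomp Require Import fraction.
From mathcomp Require Import mpoly.
From mathcomp Require Import all_order ring.
From Stdlib Require Import Classical.
Set Implicit Arguments. Unset Strict Implicit. Unset Printing Implicit Defensive.
Import GRing.Theory Order.TTheory.
Local Open Scope ring_scope.


Lemma sum_cat2 (X Y : Type) (V : nmodType) (f : X -> Y -> V) (x0 : X) (y0 : Y)
  (s1 s2 : seq X) (t1 t2 : seq Y) : size s1 = size t1 ->
  \sum_(i < size (t1 ++ t2)) f (nth x0 (s1++s2) i) (nth y0 (t1++t2) i) =
  \sum_(i < size t1) f (nth x0 s1 i) (nth y0 t1 i) +
  \sum_(i < size t2) f (nth x0 s2 i) (nth y0 t2 i).
Proof.
move=> hs; rewrite size_cat big_split_ord /=; congr (_ + _).
  by apply: eq_bigr => i _; rewrite !nth_cat /= hs ltn_ord.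
by apply: eq_bigr => i _; rewrite !nth_cat /= hs ltnNge leq_addr /= addKn.
Qed.

Section IdealLemmas.
Variable A : comNzRingType.
Implicit Types (G J : A -> Prop).

Lemma ideal_sum J (I : Type) (r : seq I) (F : I -> A) :
  is_ideal J -> (forall i, J (F i)) -> J (\sum_(i <- r) F i).
Proof.
move=> [J0 JD JM] h; elim: r => [|x r IH]; first by rewrite big_nil.
by rewrite big_cons; apply: JD.
Qed.

Lemma gen_sub G g : G g -> gen_ideal G g.
Proof.
move=> Gg; exists [:: 1], [:: g]; split; first by []; split.
  by move=> x; rewrite inE => /eqP ->.
by rewrite big_ord_recl big_ord0 /= mul1r addr0.
Qed.

Lemma gen_is_ideal G : is_ideal (gen_ideal G).
Proof.
split.
- by exists [::], [::]; split => //; rewrite big_ord0.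
- move=> x y [rs1 [gs1 [h1 [g1 ->]]]] [rs2 [gs2 [h2 [g2 ->]]]].
  exists (rs1 ++ rs2), (gs1 ++ gs2); split; [|split].
  + by rewrite !size_cat h1 h2.
  + by move=> g; rewrite mem_cat => /orP[/g1|/g2].
  + by rewrite (sum_cat2 (fun x y => x * y)).
- move=> r x [rs [gs [h [g ->]]]]; exists [seq r * x | x <- rs], gs; split; [|split].
  + by rewrite size_map.
  + by [].
  + rewrite mulr_sumr; apply: eq_bigr => i _.
    by rewrite (nth_map 0) ?h ?ltn_ord // mulrA.
Qed.

Lemma gen_min G J : is_ideal J -> (forall g, G g -> J g) ->
  forall f, gen_ideal G f -> J f.
Proof.
move=> hJ hG f [rs [gs [h [g ->]]]].
case: hJ => [J0 JD JM].
elim/big_ind: _ => // i _; apply: JM; apply: hG; apply: g; exact: mem_nth.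
Qed.

Lemma ideal_mul_sub J K a b : J a -> K b -> ideal_mul J K (a * b).
Proof. by move=> Ja Kb; apply: gen_sub; exists a, b. Qed.

Lemma ideal_mulC J K f : ideal_mul J K f -> ideal_mul K J f.
Proof.
apply: gen_min; first exact: gen_is_ideal.
by move=> g [x [y [Jx [Ky ->]]]]; rewrite mulrC; apply: ideal_mul_sub.
Qed.

Lemma ideal_mulC_eq J K : ideal_eq (ideal_mul J K) (ideal_mul K J).
Proof. by move=> x; split; apply: ideal_mulC. Qed.

End IdealLemmas.

Section SpanLemmas.
Variables (K : fieldType) (N : nat).
Local Notation S := {mpoly K[N]}.
Implicit Types (V W : S -> Prop).

Definition subspace V := [/\ V 0, (forall x y, V x -> V y -> V (x + y)) &
      (forall c x, V x -> V (c *: x))].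

Lemma subspace_sum V (I : Type) (r : seq I) (F : I -> S) :
  subspace V -> (forall i, V (F i)) -> V (\sum_(i <- r) F i).
Proof.
move=> [J0 JD JM] h; elim: r => [|x r IH]; first by rewrite big_nil.
by rewrite big_cons; apply: JD.
Qed.

Lemma kspan_sub V g : V g -> kspan V g.
Proof.
move=> Gg; exists [:: 1], [:: g]; split; first by []; split.
  by move=> x; rewrite inE => /eqP ->.
by rewrite big_ord_recl big_ord0 /= scale1r addr0.
Qed.

Lemma kspan_subspace V : subspace (kspan V).
Proof.
split.
- by exists [::], [::]; split => //; rewrite big_ord0.
- move=> x y [rs1 [gs1 [h1 [g1 ->]]]] [rs2 [gs2 [h2 [g2 ->]]]].
  exists (rs1 ++ rs2), (gs1 ++ gs2); split; [|split].
  + by rewrite !size_cat h1 h2.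
  + by move=> g; rewrite mem_cat => /orP[/g1|/g2].
  + by rewrite (sum_cat2 (fun x y => x *: y)).
- move=> r x [rs [gs [h [g ->]]]]; exists [seq r * x | x <- rs], gs; split; [|split].
  + by rewrite size_map.
  + by [].
  + rewrite scaler_sumr; apply: eq_bigr => i _.
    by rewrite (nth_map 0) ?h ?ltn_ord // scalerA.
Qed.

Lemma kspan_min V W : subspace W -> (forall g, V g -> W g) ->
  forall f, kspan V f -> W f.
Proof.
move=> hJ hG f [rs [gs [h [g ->]]]].
case: hJ => [J0 JD JM].
elim/big_ind: _ => // i _; apply: JM; apply: hG; apply: g; exact: mem_nth.
Qed.

Lemma kspanS V W : (forall g, V g -> kspan W g) -> forall f, kspan V f -> kspan W f.
Proof. move=> h; apply: kspan_min => //; exact: kspan_subspace. Qed.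

Lemma subspace_lin V (bs : seq S) (cs : seq K) :
  subspace V -> (forall b, b \in bs -> V b) ->
  V (\sum_(i < size bs) cs`_i *: bs`_i).
Proof.
move=> hV hb; case: hV => [V0 VD VZ].
elim/big_ind: _ => // i _; apply: VZ; apply: hb; exact: mem_nth.
Qed.

Definition lspan (bs : seq S) (v : S) :=
  exists cs : seq K, size cs = size bs /\ v = \sum_(i < size bs) cs`_i *: bs`_i.

Definition mkcs (f : nat -> K) (k : nat) : seq K := [seq f i | i <- iota 0 k].
Lemma size_mkcs f k : size (mkcs f k) = k.
Proof. by rewrite size_map size_iota. Qed.
Lemma nth_mkcs f k i : (i < k)%N -> (mkcs f k)`_i = f i.
Proof. by move=> h; rewrite (nth_map 0%N) ?size_iota // nth_iota. Qed.

Lemma lspan_subspace bs : subspace (lspan bs).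
Proof.
split.
- exists (mkcs (fun _ => 0) (size bs)); rewrite size_mkcs; split => //.
  by rewrite big1 // => i _; rewrite nth_mkcs // scale0r.
- move=> x y [c1 [h1 ->]] [c2 [h2 ->]].
  exists (mkcs (fun i => c1`_i + c2`_i) (size bs)); rewrite size_mkcs; split => //.
  by rewrite -big_split; apply: eq_bigr => i _; rewrite nth_mkcs // scalerDl.
- move=> c x [c1 [h1 ->]].
  exists (mkcs (fun i => c * c1`_i) (size bs)); rewrite size_mkcs; split => //.
  by rewrite scaler_sumr; apply: eq_bigr => i _; rewrite nth_mkcs // scalerA.
Qed.

Lemma lspan_mem bs b : b \in bs -> lspan bs b.
Proof.
move=> hb; exists (mkcs (fun i => (i == index b bs)%:R) (size bs)).
rewrite size_mkcs; split => //.
have hi : (index b bs < size bs)%N by rewrite index_mem.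
rewrite (bigD1 (Ordinal hi)) //= big1 ?addr0.
  by rewrite nth_mkcs // eqxx scale1r nth_index.
move=> i /negbTE hne; rewrite nth_mkcs //.
have -> : (nat_of_ord i == index b bs) = false.
  by apply/negbTE; apply: contraFN hne => /eqP h; apply/eqP/val_inj.
by rewrite scale0r.
Qed.

Lemma kspan_lspan bs v : kspan (fun x => x \in bs) v -> lspan bs v.
Proof. apply: kspan_min; [exact: lspan_subspace | exact: lspan_mem]. Qed.

Lemma lspan_kspanW bs V v : (forall b, b \in bs -> V b) -> lspan bs v -> kspan V v.
Proof. by move=> h [cs [hc ->]]; exists cs, bs. Qed.

Lemma lspanS bs cs v : (forall b, b \in bs -> lspan cs b) -> lspan bs v -> lspan cs v.
Proof.
move=> h hv; apply: kspan_lspan; apply: (kspanS (V:=fun x => x \in bs)).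
  by move=> b /h; apply: lspan_kspanW.
exact: lspan_kspanW hv.
Qed.

End SpanLemmas.

Section Homog.
Variables (R : comNzRingType) (N : nat).
Implicit Types (f g : {mpoly R[N]}).

Lemma mcoeff_hcomp f t u : (hcomp f t)@_u = if mdeg u == t then f@_u else 0.
Proof.
rewrite /hcomp raddf_sum /=.
under eq_bigr do rewrite mcoeffZ mcoeffX.
rewrite big_mkcond /=.
have [hu|hu] := boolP (u \in msupp f).
  rewrite (bigD1_seq u) //= ?msupp_uniq // eqxx mulr1 big1 ?addr0.
    by case: ifP.
  by move=> i /negbTE ->; rewrite mulr0; case: ifP.
rewrite big1_seq ?memN_msupp_eq0 //; first by case: ifP.
move=> i /andP [_ hi]; have -> : (i == u) = false.
  by apply: contraNF hu => /eqP <-.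
by rewrite mulr0; case: ifP.
Qed.

Lemma hcompD f g t : hcomp (f + g) t = hcomp f t + hcomp g t.
Proof. by apply/mpolyP => u; rewrite mcoeffD !mcoeff_hcomp mcoeffD; case: ifP; rewrite ?addr0. Qed.

Lemma hcompZ c f t : hcomp (c *: f) t = c *: hcomp f t.
Proof. by apply/mpolyP => u; rewrite mcoeffZ !mcoeff_hcomp mcoeffZ; case: ifP; rewrite ?mulr0. Qed.

Lemma hcompN f t : hcomp (- f) t = - hcomp f t.
Proof. by apply/mpolyP => u; rewrite mcoeffN !mcoeff_hcomp mcoeffN; case: ifP; rewrite ?oppr0. Qed.

Lemma hcomp0 t : hcomp 0 t = 0 :> {mpoly R[N]}.
Proof. by apply/mpolyP => u; rewrite mcoeff_hcomp !mcoeff0; case: ifP. Qed.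

Lemma hcompB f g t : hcomp (f - g) t = hcomp f t - hcomp g t.
Proof. by rewrite hcompD hcompN. Qed.

Lemma hcomp_sum (I : Type) (r : seq I) (F : I -> {mpoly R[N]}) t :
  hcomp (\sum_(i <- r) F i) t = \sum_(i <- r) hcomp (F i) t.
Proof.
elim: r => [|x r IH]; first by rewrite !big_nil hcomp0.
by rewrite !big_cons hcompD IH.
Qed.

Lemma hcomp_homog f t : hcomp f t \is t.-homog.
Proof.
apply/dhomogP => u; rewrite mcoeff_msupp mcoeff_hcomp.
by case: (mdeg u =P t) => // ; rewrite eqxx.
Qed.

Definition low f k := forall u, (mdeg u < k)%N -> f@_u = 0.

Lemma lowW f k l : (l <= k)%N -> low f k -> low f l.
Proof. by move=> hl h u hu; apply: h; apply: leq_trans hu hl. Qed.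

Lemma low0 f : low f 0.
Proof. by []. Qed.

Lemma lowD f g k : low f k -> low g k -> low (f + g) k.
Proof. by move=> h1 h2 u hu; rewrite mcoeffD h1 // h2 // addr0. Qed.

Lemma lowZ c f k : low f k -> low (c *: f) k.
Proof. by move=> h u hu; rewrite mcoeffZ h // mulr0. Qed.

Lemma lowN f k : low f k -> low (- f) k.
Proof. by move=> h u hu; rewrite mcoeffN h // oppr0. Qed.

Lemma lowM f g k l : low f k -> low g l -> low (f * g) (k + l).
Proof.
move=> h1 h2 u hu; apply/eqP; rewrite -[_ == 0]negbK -mcoeff_msupp.
apply/negP => /msuppM_le /allpairsP [[u1 u2] /= [hu1 hu2 hE]].
move: hu; rewrite hE mdegD; case: (ltnP (mdeg u1) k) => [h|h].
  by move: hu1; rewrite mcoeff_msupp h1 ?eqxx.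
case: (ltnP (mdeg u2) l) => [h'|h'].
  by move: hu2; rewrite mcoeff_msupp h2 ?eqxx.
by rewrite ltnNge leq_add.
Qed.

Lemma low_hcomp f k : low f k -> forall t, (t < k)%N -> hcomp f t = 0.
Proof.
move=> h t ht; apply/mpolyP => u; rewrite mcoeff_hcomp mcoeff0.
by case: eqP => // hu; apply: h; rewrite hu.
Qed.

Lemma hcomp_low f k : (forall t, (t < k)%N -> hcomp f t = 0) -> low f k.
Proof.
move=> h u hu; have := h _ hu; move/mpolyP/(_ u).
by rewrite mcoeff_hcomp eqxx mcoeff0.
Qed.

Lemma low_hcomp_self f d : low (hcomp f d) d.
Proof. by move=> u hu; rewrite mcoeff_hcomp; case: eqP => // hd; move: hu; rewrite hd ltnn. Qed.

Lemma low_hcompS f d : low f d -> low (f - hcomp f d) d.+1.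
Proof.
move=> h u hu; rewrite mcoeffB mcoeff_hcomp.
case: eqP => [_|hne]; first by rewrite subrr.
rewrite h ?subr0 //; rewrite ltnS leq_eqVlt in hu.
by case/orP: hu => // /eqP.
Qed.

Lemma hcomp_homog_eq f d : f \is d.-homog -> hcomp f d = f.
Proof.
move=> hf; apply/mpolyP => u; rewrite mcoeff_hcomp.
case: eqP => // /eqP hne; by rewrite (dhomog_nemf_coeff hf hne).
Qed.

Lemma hcomp_low0 f t : low f t.+1 -> hcomp f t = 0.
Proof. by move=> h; apply: (low_hcomp h). Qed.

Lemma hcompM_low f g d e : low f d -> low g e ->
  hcomp (f * g) (d + e) = hcomp f d * hcomp g e.
Proof.
move=> hf hg.
have -> : f * g = hcomp f d * hcomp g e + (hcomp f d * (g - hcomp g e) +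
   ((f - hcomp f d) * hcomp g e + (f - hcomp f d) * (g - hcomp g e))).
  by ring.
rewrite hcompD (hcomp_homog_eq (dhomogM (hcomp_homog _ _) (hcomp_homog _ _))).
have L1 : low (hcomp f d * (g - hcomp g e)) (d + e).+1.
  by rewrite -addnS; apply: lowM; [exact: low_hcomp_self| exact: low_hcompS].
have L2 : low ((f - hcomp f d) * hcomp g e) (d + e).+1.
  by rewrite -addSn; apply: lowM; [exact: low_hcompS| exact: low_hcomp_self].
have L3 : low ((f - hcomp f d) * (g - hcomp g e)) (d + e).+1.
  apply: (lowW (k := d.+1 + e.+1)); first by rewrite addSn addnS ltnW.
  by apply: lowM; exact: low_hcompS.
by rewrite !hcompD (hcomp_low0 L1) (hcomp_low0 L2) (hcomp_low0 L3) !addr0.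
Qed.



Lemma lowMl f g k : low g k -> low (f * g) k.
Proof. by move=> h; rewrite -[k]add0n; apply: lowM. Qed.

Lemma mindegE f t : mindeg f t <-> low f t /\ hcomp f t != 0.
Proof.
split.
  by case=> _ [h1 h2]; split => //; apply: hcomp_low.
case=> h1 h2; split; last by split => //; apply: low_hcomp.
by apply: contraNneq h2 => ->; rewrite hcomp0.
Qed.

Lemma hcomp_coef_ne0 f u : f@_u != 0 -> hcomp f (mdeg u) != 0.
Proof.
move=> h; apply/negP => /eqP/mpolyP/(_ u).
by rewrite mcoeff_hcomp eqxx mcoeff0 => hu; rewrite hu eqxx in h.
Qed.

Lemma low_ex f k : ~ low f k -> exists2 t, (t < k)%N & mindeg f t.
Proof.
move=> h.
have [u [hu hc]] : exists u, (mdeg u < k)%N /\ f@_u != 0.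
  apply: NNPP => hn; apply: h => u hu; apply/eqP; apply: NNPP => hc.
  by apply: hn; exists u; split => //; apply/negP.
have ex : exists t, hcomp f t != 0 by exists (mdeg u); apply: hcomp_coef_ne0.
case: (ex_minnP ex) => t0 h0 hmin; exists t0.
  by apply: leq_ltn_trans hu; apply: hmin; apply: hcomp_coef_ne0.
apply/mindegE; split => //; apply: hcomp_low => t ht.
by apply/eqP; apply: NNPP => /negP hn; have := hmin _ hn; rewrite leqNgt ht.
Qed.

Lemma mdeg_low (J : {mpoly R[N]} -> Prop) d : is_mdeg J d -> forall f, J f -> low f d.
Proof.
move=> [_ hd] f hf; apply: NNPP => hl; case: (low_ex hl) => t ht hm.
have := hd f t hf (proj1 hm) hm; by rewrite leqNgt ht.
Qed.

Lemma is_mdegP (J : {mpoly R[N]} -> Prop) d :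
  (forall f, J f -> low f d) -> (exists f, J f /\ hcomp f d != 0) -> is_mdeg J d.
Proof.
move=> hl [f [hf hc]]; split.
  exists f; split => //; [by case: (mindegE f d) => _ H; case: (H (conj (hl f hf) hc))|].
  by apply/mindegE; split => //; apply: hl.
move=> g t hg _ /mindegE [hlt hct]; rewrite leqNgt; apply/negP => htd.
by move: hct; rewrite (low_hcomp (hl g hg) htd) eqxx.
Qed.

Lemma is_mdeg_uniq (J : {mpoly R[N]} -> Prop) d d' : is_mdeg J d -> is_mdeg J d' -> d = d'.
Proof.
move=> h1 h2; case: (h1) => [[f [hf hf0 hm]] H1]; case: (h2) => [[g [hg hg0 hm']] H2].
by apply/eqP; rewrite eqn_leq (H1 g d' hg hg0 hm') (H2 f d hf hf0 hm).
Qed.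

Lemma is_mdeg_eq (J J' : {mpoly R[N]} -> Prop) d : ideal_eq J J' -> is_mdeg J d -> is_mdeg J' d.
Proof.
move=> he [[f [hf hf0 hm]] H]; split; first by exists f; split => //; apply/he.
by move=> g t /he; apply: H.
Qed.


End Homog.

Section Lex.
Variable N : nat.
Implicit Types (u v : 'X_{1..N}).

Lemma lexltE u v : mdeg u = mdeg v -> lexlt u v = (u < v)%O.
Proof.
move=> h; rewrite /lexlt; apply/existsP/(ltmcP h).
  case=> i /andP [/forallP H hi]; exists i => // j hj.
  by have := H j; rewrite hj /= => /eqP.
case=> i H hi; exists i; rewrite hi andbT; apply/forallP => j.
by apply/implyP => hj; rewrite H.
Qed.

Lemma lexlt0 v : v != 0%MM -> lexlt 0%MM v.
Proof.
move=> hv.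
have ex : exists i : nat, [exists j : 'I_N, (nat_of_ord j == i) && (v j != 0%N)].
  apply: NNPP => hn; apply/negP: hv; rewrite negbK; apply/eqP/mnmP => i.
  rewrite mnm0E; apply/eqP; apply: NNPP => hi; apply: hn; exists i.
  by apply/existsP; exists i; rewrite eqxx; apply/negP.
case: (ex_minnP ex) => i /existsP [i0 /andP [/eqP hi0 hi]] hmin.
apply/existsP; exists i0; apply/andP; split.
  apply/forallP => j; apply/implyP => hj; rewrite mnm0E eq_sym.
  apply: NNPP => /negP hjn.
  have : (i <= j)%N by apply: hmin; apply/existsP; exists j; rewrite eqxx hjn.
  by rewrite leqNgt -hi0 hj.
by rewrite mnm0E lt0n.
Qed.

Lemma lexltxx u : lexlt u u = false.
Proof. by apply/negbTE/existsP; case=> i /andP [_]; rewrite ltnn. Qed.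

Lemma inm_foldr (s : seq 'X_{1..N}) d : all (fun u => mdeg u == d) s ->
  foldr (fun mm acc => if lexlt acc mm then mm else acc) 0%MM s =
  (\join_(x <- s) x)%O /\ (\join_(x <- s) x)%O \in 0%MM :: s.
Proof.
elim: s => [|x s IH] /=; first by rewrite big_nil mem_head.
case/andP => /eqP hx hs; case: (IH hs) => -> hin; rewrite big_cons.
set j := (\join_(x0 <- s) x0)%O in hin *.
have hlt : lexlt j x = (j < x)%O.
  move: hin; rewrite inE => /orP [/eqP ->|hin].
    have [->|hx0] := eqVneq x 0%MM; first by rewrite lexltxx ltxx.
    by rewrite lexlt0 // lt_def hx0 le0x.
  by rewrite lexltE // hx; move/allP: hs => /(_ _ hin) /eqP.
have -> : (x `|` j)%O = if (j < x)%O then x else j.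
  rewrite joinEtotal maxElt; case: (ltgtP j x) => //.
rewrite hlt; split => //.
case: ifP => _; first by rewrite !inE eqxx orbT.
by move: hin; rewrite !inE => /orP [->|->]; rewrite ?orbT.
Qed.

Lemma inm_homog (R : nzRingType) (f : {mpoly R[N]}) d : f \is d.-homog -> inm f = mlead f.
Proof.
move=> /dhomogP hf; rewrite /inm /mlead.
have hall : all (fun u => mdeg u == d) (msupp f) by apply/allP => u /hf ->.
by case: (inm_foldr hall).
Qed.

End Lex.

Definition ox n : 'I_n.+2 := @Ordinal n.+2 0 isT.
Definition oy n : 'I_n.+2 := @Ordinal n.+2 1 isT.
Definition mon n m i : 'X_{1..n.+2} := (U_(ox n) *+ (m - i) + U_(oy n) *+ i)%MM.

Section Mon.
Variable n : nat.
Local Notation ox := (ox n).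
Local Notation oy := (oy n).
Local Notation mon := (mon n).

Lemma XmonE (R : comNzRingType) m i : 'X_[mon m i] = varX R n ^+ (m - i) * varY R n ^+ i :> {mpoly R[n.+2]}.
Proof. by rewrite /mon mpolyXD -!mpolyXn. Qed.

Lemma monE m i j : mon m i j = if j == ox then (m - i)%N else if j == oy then i else 0%N.
Proof.
rewrite /mon mnmDE !mulmnE !mnm1E -!val_eqE /=.
by case: j => [[|[|j]] hj] /=; rewrite ?mul1n ?mul0n ?addn0.
Qed.

Lemma monE_x m i : mon m i ox = (m - i)%N. Proof. by rewrite monE eqxx. Qed.
Lemma monE_y m i : mon m i oy = i. Proof. by rewrite monE. Qed.

Lemma mdeg_mon m i : (i <= m)%N -> mdeg (mon m i) = m.
Proof. by move=> h; rewrite /mon mdegD !mdegMn !mdeg1 !mul1n subnK. Qed.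

Lemma mon_inj m i i' : mon m i = mon m i' -> i = i'.
Proof. by move=> h; rewrite -(monE_y m i) h monE_y. Qed.

Lemma mon_lt m i : (0 < i <= m)%N -> (mon m i < mon m 0)%O.
Proof.
case/andP=> h0 h1; rewrite -lexltE ?mdeg_mon //.
apply/existsP; exists ox; apply/andP; split.
  by apply/forallP => j; apply/implyP; case: j => [[|j] hj].
by rewrite !monE_x subn0 ltn_subrL h0 (leq_trans h0 h1).
Qed.

Lemma mdeg_xy (u : 'X_{1..n.+2}) : (forall j, j != ox -> j != oy -> u j = 0%N) ->
  mdeg u = (u ox + u oy)%N.
Proof.
move=> h; rewrite mdegE (bigD1 ox) //= (bigD1 oy) //= big1 ?addn0 //.
by move=> j /andP [hy hx]; apply: h.
Qed.

Lemma mon_char (u : 'X_{1..n.+2}) d : (forall j, j != ox -> j != oy -> u j = 0%N) ->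
  mdeg u = d -> u = mon d (u oy) /\ (u oy <= d)%N.
Proof.
move=> h hd; have hd' := mdeg_xy h; rewrite hd in hd'.
split; last by rewrite hd' leq_addl.
apply/mnmP => j; rewrite monE.
case: (eqVneq j ox) => [->|hx]; first by rewrite hd' addnK.
case: (eqVneq j oy) => [->|hy] //; exact: h.
Qed.

Lemma mon_split (u v : 'X_{1..n.+2}) m i d : (u + v)%MM = mon m i -> mdeg u = d ->
  u = mon d (u oy) /\ (u oy <= d)%N.
Proof.
move=> huv hd; apply: mon_char hd => j hx hy.
have := congr1 (fun w : 'X_{1..n.+2} => w j) huv; rewrite mnmDE monE /=.
by rewrite (negbTE hx) (negbTE hy) => /eqP; rewrite addn_eq0 => /andP [/eqP].
Qed.

End Mon.

Section Ext2.
Variables (D : idomainType) (n : nat).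
Local Notation K := {fraction D}.
Local Notation RR := {mpoly D[n.+2]}.
Local Notation SS := {mpoly K[n.+2]}.

Lemma extK_coef (f : RR) u : (extK f)@_u = FracField.tofrac (f@_u).
Proof. by rewrite /extK mcoeff_map_mpoly. Qed.

Lemma extK_hcomp (f : RR) t : extK (hcomp f t) = hcomp (extK f) t.
Proof.
apply/mpolyP => u; rewrite extK_coef !mcoeff_hcomp extK_coef.
by case: ifP; rewrite ?tofrac0.
Qed.

Lemma extKM (f g : RR) : extK (f * g) = extK f * extK g.
Proof. by rewrite /extK rmorphM. Qed.

Lemma extKD (f g : RR) : extK (f + g) = extK f + extK g.
Proof. by rewrite /extK rmorphD. Qed.

Lemma extK_sum (I : Type) (r : seq I) (F : I -> RR) :
  extK (\sum_(i <- r) F i) = \sum_(i <- r) extK (F i).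
Proof. by rewrite /extK rmorph_sum. Qed.

Lemma extKX (u : 'X_{1..n.+2}) : extK (D := D) 'X_[u] = 'X_[u].
Proof. by rewrite /extK map_mpolyX. Qed.

Lemma extK_eq0 (f : RR) : (extK f == 0) = (f == 0).
Proof.
apply/eqP/eqP => [h|->]; last by rewrite /extK rmorph0.
apply/mpolyP => u; have := congr1 (mcoeff u) h.
by rewrite extK_coef mcoeff0 => /eqP; rewrite tofrac_eq0 mcoeff0 => /eqP.
Qed.

Lemma homog_subspace d : subspace (fun v : SS => v \is d.-homog).
Proof.
split; first exact: rpred0.
  by move=> x y hx hy; apply: rpredD.
by move=> c x hx; apply: rpredZ.
Qed.

Lemma JK_homog (J : RR -> Prop) i v : JK J i v -> v \is i.-homog.
Proof.
move=> hv; apply: (kspan_min (homog_subspace i) _ hv).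
by move=> g [f [_ ->]]; rewrite extK_hcomp; apply: hcomp_homog.
Qed.

End Ext2.

Section Elim.
Variables (K : fieldType) (N : nat).
Local Notation S := {mpoly K[N]}.
Implicit Types (v w : S) (ws vs : seq S).

Definition sdec ws := sorted (fun x y : S => (mlead y < mlead x)%O) ws.
Definition nzs ws := all (fun w : S => w != 0) ws.

Lemma lspan0 ws : lspan ws 0.
Proof. by case: (lspan_subspace ws). Qed.

Lemma lspanB ws x y c : lspan ws x -> lspan ws y -> lspan ws (x - c *: y).
Proof.
case: (lspan_subspace ws) => [_ hD hZ] hx hy; apply: hD => //.
by rewrite -scaleNr; apply: hZ.
Qed.

Lemma lspanD ws x y c : lspan ws x -> lspan ws y -> lspan ws (x + c *: y).
Proof. by case: (lspan_subspace ws) => [_ hD hZ] hx hy; apply: hD => //; apply: hZ. Qed.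

Lemma lspan_sub ws vs : {subset ws <= vs} -> forall x, lspan ws x -> lspan vs x.
Proof. by move=> h x; apply: lspanS => b /h; apply: lspan_mem. Qed.

Lemma mlead_subl v w : v != 0 -> w != 0 -> mlead v = mlead w ->
  let v' := v - (mleadc v / mleadc w) *: w in v' != 0 -> (mlead v' < mlead w)%O.
Proof.
move=> hv hw he v' hv'.
have hle : (mlead v' <= mlead w)%O.
  by apply: le_trans (mleadB_le _ _) _; rewrite leUx he lexx mleadZ_le.
rewrite lt_def hle andbT; apply/negP => /eqP hE.
have := mlead_supp hv'; rewrite mcoeff_msupp -hE /v' mcoeffB mcoeffZ -he.
rewrite he mulfVK ?subrr ?eqxx //.
by rewrite mleadc_eq0.
Qed.

Lemma sdec_lt w ws x : sdec (w :: ws) -> x \in ws -> (mlead x < mlead w)%O.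
Proof.
move=> hs hx.
have H := order_path_min (leT := fun x y : S => (mlead y < mlead x)%O) _ hs.
by move/allP: (H (fun a b c h1 h2 => lt_trans h2 h1)) => /(_ _ hx).
Qed.

Lemma sdec_cons w ws : sdec ws -> (forall x, x \in ws -> (mlead x < mlead w)%O) -> sdec (w :: ws).
Proof.
case: ws => [|x ws] //= h1 h2; rewrite h1 andbT; apply: h2; exact: mem_head.
Qed.

Definition ins_spec v ws ws' :=
  [/\ sdec ws', nzs ws', (forall x, x \in ws' -> lspan (v :: ws) x),
      (forall x, x \in v :: ws -> lspan ws' x) &
      (forall x, x \in ws' -> exists u, [/\ u \in v :: ws, u != 0 & (mlead x <= mlead u)%O])].

Lemma insert ws : sdec ws -> nzs ws -> forall v, exists ws', ins_spec v ws ws'.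
Proof.
elim: ws => [|w ws IH] hs hnz v.
  have [->|hv] := eqVneq v 0.
    exists [::]; split => // x; rewrite inE => /eqP ->; exact: lspan0.
  exists [:: v]; split => //=; first by rewrite hv.
  - by move=> x; rewrite inE => /eqP ->; apply: lspan_mem; rewrite mem_head.
  - by move=> x; rewrite inE => /eqP ->; apply: lspan_mem; rewrite mem_head.
  - move=> x; rewrite inE => /eqP ->; exists v; split => //; exact: mem_head.
have hs0 : sdec ws by apply: path_sorted hs.
case/andP: hnz => hw hnz0.
have hlt := sdec_lt hs.
have [->|hv] := eqVneq v 0.
  exists (w :: ws); split => //=; first by rewrite hw.
  - by move=> x hx; apply: lspan_mem; rewrite inE hx orbT.
  - move=> x; rewrite inE => /orP [/eqP ->|hx]; first exact: lspan0.
    exact: lspan_mem.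
  - move=> x hx; exists x; split => //; first by rewrite inE hx orbT.
    by move/allP: hnz0 => H; move: hx; rewrite inE => /orP [/eqP ->|/H].
have cont : forall v', (v' = 0 \/ (mlead v' < mlead w)%O) ->
   (forall x, x \in v' :: ws -> lspan (v :: w :: ws) x) ->
   lspan (w :: v' :: ws) v ->
   exists ws', ins_spec v (w :: ws) ws'.
  move=> v' hv' hsp1 hsp2; case: (IH hs0 hnz0 v') => ws0 [s1 n1 p1 p2 b1].
  have hb : forall x, x \in ws0 -> (mlead x < mlead w)%O.
    move=> x /b1 [u [hu hu0 hxu]]; apply: le_lt_trans hxu _.
    move: hu; rewrite inE => /orP [/eqP hE|/hlt //]; rewrite hE.
    by case: hv' => // h0; rewrite hE h0 eqxx in hu0.
  exists (w :: ws0); split.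
  - exact: sdec_cons.
  - by rewrite /= hw.
  - move=> x; rewrite inE => /orP [/eqP ->|/p1 hx].
      by apply: lspan_mem; rewrite !inE eqxx orbT.
    exact: (lspanS hsp1).
  - move=> x; rewrite !inE => /orP [/eqP ->|/orP [/eqP ->|hx]].
    + apply: (lspanS _ hsp2) => y; rewrite !inE => /orP [/eqP ->|hy].
        by apply: lspan_mem; rewrite mem_head.
      apply: (lspan_sub (ws := ws0)); first by move=> z hz; rewrite inE hz orbT.
      by apply: p2; rewrite inE.
    + by apply: lspan_mem; rewrite mem_head.
    + apply: (lspan_sub (ws := ws0)); first by move=> z hz; rewrite inE hz orbT.
      by apply: p2; rewrite inE hx orbT.
  - move=> x; rewrite inE => /orP [/eqP ->|/hb hx].
      by exists w; rewrite !inE eqxx orbT hw lexx.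
    by exists w; rewrite !inE eqxx orbT hw (ltW hx).
case: (ltgtP (mlead w) (mlead v)) => hc.
- exists (v :: w :: ws); split.
  + by apply: sdec_cons => // x; rewrite inE => /orP [/eqP ->|/hlt/lt_trans]; [|apply].
  + by rewrite /= hv hw.
  + by move=> x hx; apply: lspan_mem.
  + by move=> x hx; apply: lspan_mem.
  + by move=> x hx; exists x; split => //; move: hx; rewrite !inE => /orP [/eqP ->//|/orP [/eqP ->//|]]; move/allP: hnz0 => H /H.
- apply: (cont v); first by right.
  + move=> x; rewrite inE => /orP [/eqP ->|hx]; apply: lspan_mem; rewrite !inE ?eqxx //.
    by rewrite hx !orbT.
  + by apply: lspan_mem; rewrite !inE eqxx orbT.
- set c := mleadc v / mleadc w.
  apply: (cont (v - c *: w)).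
  + have [h0|h0] := eqVneq (v - c *: w) 0; first by left.
    by right; apply: mlead_subl.
  + move=> x; rewrite inE => /orP [/eqP ->|hx].
      by apply: lspanB; apply: lspan_mem; rewrite !inE eqxx ?orbT.
    by apply: lspan_mem; rewrite !inE hx !orbT.
  + rewrite [X in lspan _ X](_ : v = (v - c *: w) + c *: w); last by rewrite subrK.
    by apply: lspanD; apply: lspan_mem; rewrite !inE eqxx ?orbT.
Qed.

Lemma elim_basis vs : exists ws,
  [/\ sdec ws, nzs ws, (forall x, x \in ws -> lspan vs x) & (forall x, x \in vs -> lspan ws x)].
Proof.
elim: vs => [|v vs [ws0 [s0 n0 p0 q0]]].
  by exists [::]; split.
case: (insert s0 n0 v) => ws [s1 n1 p1 q1 _]; exists ws; split => //.
  move=> x /p1; apply: lspanS => y; rewrite inE => /orP [/eqP ->|hy].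
    by apply: lspan_mem; rewrite mem_head.
  by apply: (lspan_sub (ws := vs)) (p0 _ hy) => z hz; rewrite inE hz orbT.
move=> x; rewrite inE => /orP [/eqP ->|hx]; first by apply: q1; rewrite mem_head.
apply: (lspanS _ (q0 _ hx)) => y hy; apply: q1; by rewrite inE hy orbT.
Qed.

Lemma sdec_indep ws : sdec ws -> nzs ws -> lin_indep ws.
Proof.
elim: ws => [|w ws IH] hs hnz cs hcs hsum i hi //.
case: cs hcs hsum => [//|c cs] /= /eqP; rewrite eqSS => /eqP hcs.
rewrite big_ord_recl /= => hsum.
case/andP: hnz => hw hnz0.
have hlt := sdec_lt hs.
have hc : c = 0.
  have := congr1 (mcoeff (mlead w)) hsum.
  rewrite mcoeffD mcoeffZ raddf_sum /= big1 ?addr0 ?mcoeff0.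
    by move/eqP; rewrite mulf_eq0 mleadc_eq0 (negbTE hw) orbF => /eqP h.
  move=> j _; rewrite mcoeffZ mcoeff_gt_mlead ?mulr0 //.
  by apply: hlt; rewrite add0n mem_nth.
case: i hi => [//|i] hi /=.
apply: (IH (path_sorted hs) hnz0 cs hcs) => //.
by move: hsum; rewrite hc scale0r add0r.
Qed.

Lemma steinitz bs ws : lin_indep bs -> (forall b, b \in bs -> lspan ws b) ->
  (size bs <= size ws)%N.
Proof.
move=> hind hsp; rewrite leqNgt; apply/negP => hgt.
set k := size bs; set r := size ws.
have hex : forall i : 'I_k, exists c : seq K, size c = r /\
    bs`_i = \sum_(j < r) c`_j *: ws`_j.
  by move=> i; apply: hsp; apply: mem_nth.
case: (fin_all_exists hex) => cf hcf.
pose C : 'M[K]_(k, r) := \matrix_(i, j) (cf i)`_j.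
have hk : kermx C != 0.
  rewrite -mxrank_eq0 mxrank_ker subn_eq0 -ltnNge.
  exact: leq_ltn_trans (rank_leq_col C) hgt.
have [i0 [j0 hij]] : exists i j, kermx C i j != 0.
  apply: NNPP => hn; move/negP: hk; apply; apply/eqP/matrixP => i j.
  rewrite [RHS]mxE; apply/eqP; apply: NNPP => h; apply: hn; exists i, j; exact/negP.
pose x := row i0 (kermx C).
have hx : x *m C = 0 by rewrite /x -row_mul mulmx_ker row0.
pose cs := mkcs (fun i => x 0 (insubd i0 i)) k.
have hcs : forall i : 'I_k, cs`_i = x 0 i.
  by move=> i; rewrite /cs nth_mkcs // valKd.
have hsum : \sum_(i < size bs) cs`_i *: bs`_i = 0.
  transitivity (\sum_(j < r) (x *m C) 0 j *: ws`_j); last first.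
    by rewrite hx big1 // => j _; rewrite mxE scale0r.
  under eq_bigr do rewrite hcs (proj2 (hcf _)) scaler_sumr.
  rewrite exchange_big /=; apply: eq_bigr => j _.
  rewrite mxE scaler_suml; apply: eq_bigr => i _.
  by rewrite scalerA /C !mxE.
have := hind cs (size_mkcs _ _) hsum j0 (ltn_ord j0).
by rewrite hcs /x mxE => h; rewrite h eqxx in hij.
Qed.

End Elim.

Section DetCong.
Variables (A : comNzRingType) (J : A -> Prop).
Hypothesis hJ : is_ideal J.

Lemma det_cong k (B C : 'M[A]_k) : (forall i j, J (B i j - C i j)) -> J (\det B - \det C).
Proof.
case: hJ => [J0 JD JM] h.
have Krefl : forall x, J (x - x) by move=> x; rewrite subrr.
have KD : forall x1 x2 y1 y2, J (x1 - x2) -> J (y1 - y2) -> J ((x1 + y1) - (x2 + y2)).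
  by move=> x1 x2 y1 y2 h1 h2; rewrite opprD addrACA; apply: JD.
have KM : forall x1 x2 y1 y2, J (x1 - x2) -> J (y1 - y2) -> J ((x1 * y1) - (x2 * y2)).
  move=> x1 x2 y1 y2 h1 h2.
  have -> : x1 * y1 - x2 * y2 = x1 * (y1 - y2) + y2 * (x1 - x2) by ring.
  by apply: JD; apply: JM.
rewrite /determinant.
apply: (big_ind2 (fun x y => J (x - y))).
- by rewrite subrr.
- exact: KD.
- move=> s _; apply: (KM); first exact: Krefl.
  apply: (big_ind2 (fun x y => J (x - y))).
  + by rewrite subrr.
  + exact: KM.
  + by move=> i _; apply: h.
Qed.

End DetCong.

Section Naka.
Variables (D : idomainType) (n m : nat).
Local Notation RR := {mpoly D[n.+2]}.
Variable P : RR -> Prop.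
Hypothesis hP : forall p, P p -> exists i, (i <= m)%N /\ p = 'X_[mon n m i].

Definition Gen i := (i <= m)%N /\ P 'X_[mon n m i].
Definition Mon (u : 'X_{1..n.+2}) := exists i, Gen i /\ (mon n m i <= u)%MM.

Lemma lem_refl' (u : 'X_{1..n.+2}) : (u <= u)%MM.
Proof. by apply/forallP => i. Qed.

Lemma lem_trans' (u v w : 'X_{1..n.+2}) : (u <= v)%MM -> (v <= w)%MM -> (u <= w)%MM.
Proof.
move=> /forallP h1 /forallP h2; apply/forallP => i; exact: leq_trans (h1 i) (h2 i).
Qed.

Lemma Mon_trans u v : Mon u -> (u <= v)%MM -> Mon v.
Proof. by move=> [i [hg hl]] huv; exists i; split => //; apply: lem_trans' hl huv. Qed.

Lemma I_char1 f : gen_ideal P f -> forall u, u \in msupp f -> Mon u.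
Proof.
move=> hf; apply: (gen_min (J := fun f => forall u, u \in msupp f -> Mon u) _ _ hf).
  split.
  - by move=> u; rewrite msupp0.
  - move=> x y hx hy u /msuppD_le; rewrite mem_cat => /orP [/hx|/hy] //.
  - move=> r x hx u /msuppM_le /allpairsP [[u1 u2] /= [_ hu2 ->]].
    by apply: Mon_trans (hx _ hu2) _; apply: lem_addl.
move=> g hg; case: (hP hg) => i [hi he] u; rewrite he msuppX inE => /eqP ->.
by exists i; split; [split => //; rewrite -he | apply: lem_refl'].
Qed.

Lemma I_char2 f : (forall u, u \in msupp f -> Mon u) -> gen_ideal P f.
Proof.
move=> h; rewrite [f]mpolyE big_seq; apply: (big_ind (gen_ideal P)).
- by case: (gen_is_ideal P).
- by case: (gen_is_ideal P).
move=> u /h [i [[hi hPi] hl]].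
have -> : 'X_[u] = 'X_[u - mon n m i] * 'X_[mon n m i] :> RR by rewrite -mpolyXD submK.
rewrite scalerAl.
case: (gen_is_ideal P) => [_ _ JM]; apply: JM; exact: gen_sub.
Qed.

Lemma ltm_addl (u1 u2 : 'X_{1..n.+2}) : u1 != 0%MM -> (u2 < (u1 + u2)%MM)%O.
Proof.
move=> h; rewrite lt_def lemc_addl andbT; apply/negP => /eqP he.
have := congr1 mdeg he; rewrite mdegD => /eqP.
by rewrite -[X in _ == X]add0n eqn_add2r mdeg_eq0 (negbTE h).
Qed.

Lemma I_cancel p g : p@_0%MM != 0 -> gen_ideal P (p * g) -> gen_ideal P g.
Proof.
move=> hp hpg; apply: I_char2 => u; elim/(@ltmwf n.+2): u => u IH hu.
apply: NNPP => hM.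
set c := p@_0%MM; set p' := p - c%:MP.
have he : p * g = c *: g + p' * g by rewrite /p' mulrBl mul_mpolyC addrC subrK.
have h0 : (p' * g)@_u = 0.
  apply/eqP; apply: NNPP => /negP hne; move: hne; rewrite -mcoeff_msupp.
  move=> /msuppM_le /allpairsP [[u1 u2] /= [hu1 hu2 hE]].
  have hu10 : u1 != 0%MM.
    apply: contraTneq hu1 => ->; rewrite mcoeff_msupp /p' mcoeffB mcoeffC eqxx mulr1.
    by rewrite subrr eqxx.
  apply: hM; apply: (Mon_trans (IH u2 _ hu2)); first by rewrite hE ltm_addl.
  by rewrite hE lem_addl.
apply: hM; apply: (I_char1 hpg); rewrite mcoeff_msupp he mcoeffD h0 addr0 mcoeffZ.
by rewrite mulf_neq0 // -mcoeff_msupp.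
Qed.

Lemma gen_list : exists gl : seq nat, forall i, i \in gl <-> Gen i.
Proof.
suff H : forall k, exists gl : seq nat, forall i, i \in gl <-> ((i < k)%N /\ Gen i).
  case: (H m.+1) => gl hgl; exists gl => i; rewrite hgl; split; first by case.
  by move=> hg; split => //; case: hg.
elim=> [|k [gl hgl]]; first by exists [::] => i; split => //; case.
case: (classic (Gen k)) => hk.
  exists (k :: gl) => i; rewrite inE ltnS leq_eqVlt; split.
    case/orP => [/eqP ->|/hgl [h1 h2]]; first by rewrite eqxx.
    by rewrite h1 orbT.
  case=> /orP [/eqP ->|h] hg; first by rewrite eqxx.
  by apply/orP; right; apply/hgl.
exists gl => i; rewrite ltnS leq_eqVlt; split.
  by move/hgl => [h1 h2]; rewrite h1 orbT.
case=> /orP [/eqP hik|h] hg; last by apply/hgl.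
by rewrite hik in hg.
Qed.

Lemma naka (a b : RR -> Prop) : is_ideal a -> is_ideal b -> ~ ideal_eq a (@unit_ideal _) ->
  ideal_eq (gen_ideal P) (ideal_mul a b) -> P 'X_[mon n m 0] ->
  forall p, a p -> p@_0%MM != 0 -> False.
Proof.
move=> ha hb ha1 hI hX p hap hp.
have bI : forall g, b g -> gen_ideal P g.
  by move=> g hg; apply: (I_cancel hp); apply/hI; apply: ideal_mul_sub.
case: gen_list => gl hgl.
pose k := size gl.
pose g (j : 'I_k) : RR := 'X_[mon n m (nth 0%N gl j)].
pose Comb (J : RR -> Prop) h := exists al : 'I_k -> RR, (forall l, J (al l)) /\ h = \sum_l al l * g l.
have Comb_ideal : forall J, is_ideal J -> is_ideal (Comb J).
  move=> J [J0 JD JM]; split.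
  - by exists (fun _ => 0); split => //; rewrite big1 // => l _; rewrite mul0r.
  - move=> x y [al [h1 ->]] [be [h2 ->]]; exists (fun l => al l + be l); split.
      by move=> l; apply: JD.
    by rewrite -big_split; apply: eq_bigr => l _; rewrite mulrDl.
  - move=> r x [al [h1 ->]]; exists (fun l => r * al l); split; first by move=> l; apply: JM.
    by rewrite mulr_sumr; apply: eq_bigr => l _; rewrite mulrA.
have unit_ideal_ok : is_ideal (@unit_ideal RR) by [].
have IComb : forall h, gen_ideal P h -> Comb (@unit_ideal _) h.
  move=> h hh; apply: (gen_min (Comb_ideal _ unit_ideal_ok) _ hh) => q hq.
  case: (hP hq) => i [hi hqe].
  have hgi : Gen i by split => //; rewrite -hqe.
  have hin : i \in gl by apply/hgl.
  have hj : (index i gl < k)%N by rewrite index_mem.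
  exists (fun l => (l == Ordinal hj)%:R); split => //.
  rewrite (bigD1 (Ordinal hj)) //= eqxx mul1r big1 ?addr0.
    by rewrite /g /= nth_index.
  by move=> l /negbTE ->; rewrite mul0r.
have abComb : forall h, ideal_mul a b h -> Comb a h.
  move=> h hh; apply: (gen_min (Comb_ideal _ ha) _ hh) => q [x [y [hx [hy ->]]]].
  case: (IComb _ (bI _ hy)) => be [_ ->]; exists (fun l => x * be l); split.
    by move=> l; case: ha => [_ _ JM]; rewrite mulrC; apply: JM.
  by rewrite mulr_sumr; apply: eq_bigr => l _; rewrite mulrA.
have hex : forall j : 'I_k, exists al : 'I_k -> RR, (forall l, a (al l)) /\ g j = \sum_l al l * g l.
  move=> j; apply: abComb; apply/hI; apply: gen_sub.
  have : Gen (nth 0%N gl j) by apply/hgl; apply: mem_nth.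
  by case.
case: (fin_all_exists hex) => F hF.
pose M : 'M[RR]_k := 1%:M - \matrix_(j, l) F j l.
pose G : 'cV[RR]_k := \col_j g j.
have hMG : M *m G = 0.
  apply/matrixP => j z; rewrite !mxE (ord1 z).
  under eq_bigr do rewrite !mxE mulrBl.
  rewrite sumrB (bigD1 j) //= eqxx mul1r big1 ?addr0; last first.
    by move=> l /negbTE; rewrite eq_sym => ->; rewrite mul0r.
  by rewrite -(proj2 (hF j)) subrr.
have hdet : forall j, \det M * g j = 0.
  move=> j; have := congr1 (fun X : 'cV[RR]_k => X j 0) (congr1 (mulmx (\adj M)) hMG).
  by rewrite mulmxA mul_adj_mx mul_scalar_mx mulmx0 !mxE.
have hin0 : 0%N \in gl by apply/hgl; split.
have hj0 : (index 0%N gl < k)%N by rewrite index_mem.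
have hg0 : g (Ordinal hj0) != 0.
  apply/negP => /eqP /(congr1 (mcoeff (mon n m 0))).
  by rewrite /g /= nth_index // mcoeffX eqxx mcoeff0 => /eqP; rewrite oner_eq0.
have hdM : \det M = 0.
  by have := hdet (Ordinal hj0); move/eqP; rewrite mulf_eq0 (negbTE hg0) orbF => /eqP.
case: (ha) => [J0 JD JM].
have hc : a (\det M - \det (1%:M : 'M[RR]_k)).
  apply: det_cong => // i j; rewrite /M !mxE.
  have -> : (i == j)%:R - F i j - (i == j)%:R = (-1) * F i j :> RR by ring.
  by apply: JM; case: (hF i) => H _; apply: H.
rewrite hdM det1 sub0r in hc.
have h1 : a 1 by have := JM (-1) (-1) hc; rewrite mulrNN mulr1.
apply: ha1 => x; split => // _; rewrite -[x]mulr1; exact: JM.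
Qed.

End Naka.

Section SpanMore.
Variables (K : fieldType) (N : nat).
Local Notation S := {mpoly K[N]}.
Implicit Types (G H W V : S -> Prop).

Lemma kspan_mul2 G H W : subspace W -> (forall g h, G g -> H h -> W (g * h)) ->
  forall v w, kspan G v -> kspan H w -> W (v * w).
Proof.
move=> hW hGH v w hv.
have hsub : subspace (fun v => forall w, kspan H w -> W (v * w)).
  case: (hW) => [W0 WD WZ]; split.
  - by move=> w' _; rewrite mul0r.
  - by move=> x y hx hy w' hw'; rewrite mulrDl; apply: WD; [apply: hx|apply: hy].
  - by move=> c x hx w' hw'; rewrite -scalerAl; apply: WZ; apply: hx.
apply: (kspan_min hsub _ hv) => g hg w' hw'.
have hsub2 : subspace (fun w => W (g * w)).
  case: (hW) => [W0 WD WZ]; split.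
  - by rewrite mulr0.
  - by move=> x y hx hy; rewrite mulrDr; apply: WD.
  - by move=> c x hx; rewrite -scalerAr; apply: WZ.
by apply: (kspan_min hsub2 _ hw') => h hh; apply: hGH.
Qed.

Lemma kspan_coef G v u : kspan G v -> v@_u != 0 -> exists g, G g /\ g@_u != 0.
Proof.
move=> hv hvu; apply: NNPP => hn; move/negP: hvu; apply; apply/eqP.
have hsub : subspace (fun v : S => v@_u = 0).
  split; first by rewrite mcoeff0.
  - by move=> x y hx hy; rewrite mcoeffD hx hy addr0.
  - by move=> c x hx; rewrite mcoeffZ hx mulr0.
apply: (kspan_min hsub _ hv) => g hg; apply/eqP; apply: NNPP => /negP hgu.
by apply: hn; exists g.
Qed.

Lemma kspan_closed G v : kspan (kspan G) v -> kspan G v.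
Proof. by apply: kspan_min => //; exact: kspan_subspace. Qed.

Lemma good_basis V r : is_dim V r -> (forall x, kspan V x -> V x) ->
  exists fs, [/\ size fs = r, is_basis V fs, sdec fs & nzs fs].
Proof.
move=> [bs [hsz [hin hind hsp]]] hcl.
case: (elim_basis bs) => ws [hs hnz p q].
exists ws; split => //.
- apply/eqP; rewrite eqn_leq; apply/andP; split.
    rewrite -hsz; apply: steinitz => //; exact: sdec_indep.
  by rewrite -hsz; apply: steinitz => // b hb; apply: q.
- split.
  + by move=> x /p hx; apply: hcl; apply: lspan_kspanW hx.
  + exact: sdec_indep.
  + by move=> v /hsp hv; apply: (lspanS q hv).
Qed.

End SpanMore.

Definition Prod (K : fieldType) (N : nat) (fs gs : seq {mpoly K[N]}) (h : {mpoly K[N]}) :=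
  exists f g, [/\ f \in fs, g \in gs & h = f * g].

Section Side.
Variables (K : fieldType) (n m d e : nat) (Q : nat -> Prop).
Local Notation S := {mpoly K[n.+2]}.
Variables (fs gs : seq S).
Hypotheses (sf : sdec fs) (nf : nzs fs) (sg : sdec gs) (ng : nzs gs).
Hypotheses (hf : forall f, f \in fs -> f \is d.-homog) (hg : forall g, g \in gs -> g \is e.-homog).
Hypotheses (hd : (1 <= d)%N) (hm : m = (d + e)%N).
Hypothesis HPair : forall f g, f \in fs -> g \in gs ->
  exists i, [/\ (i <= m)%N, Q i & (mlead f + mlead g)%MM = mon n m i].
Hypotheses (HX : kspan (Prod fs gs) 'X_[mon n m 0]) (HY : kspan (Prod fs gs) 'X_[mon n m m]).

Lemma nz_in (s : seq S) x : nzs s -> x \in s -> x != 0.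
Proof. by move/allP => h /h. Qed.

Lemma mdeg_mlead_h (f : S) k : f != 0 -> f \is k.-homog -> mdeg (mlead f) = k.
Proof. by move=> h0 /dhomogP h; apply: h; apply: mlead_supp. Qed.

Lemma mlead_le_head (s : seq S) x : sdec s -> x \in s -> (mlead x <= mlead s`_0)%O.
Proof.
case: s => [//|y s] hs; rewrite inE => /orP [/eqP ->//|hx].
exact/ltW/(sdec_lt hs hx).
Qed.

Lemma side : (2 <= size fs)%N /\ mlead fs`_0 = mon n d 0.
Proof.
have hXne : ('X_[mon n m 0] : S)@_(mon n m 0) != 0 by rewrite mcoeffX eqxx oner_eq0.
case: (kspan_coef HX hXne) => h [[f [g [hfin hgin ->]]] hfg].
have f0in : fs`_0 \in fs.
  by apply: mem_nth; rewrite lt0n size_eq0; apply/negP => /eqP h0; rewrite h0 in hfin.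
have g0in : gs`_0 \in gs.
  by apply: mem_nth; rewrite lt0n size_eq0; apply/negP => /eqP h0; rewrite h0 in hgin.
have hnz : forall f g, f \in fs -> g \in gs -> mlead (f * g) = (mlead f + mlead g)%MM.
  move=> f' g' hf' hg'; apply: mleadM_proper; rewrite mulf_neq0 // mleadc_eq0.
    exact: nz_in hf'.
  exact: nz_in hg'.
case: (HPair f0in g0in) => i0 [hi0 _ he0].
have hle : (mon n m 0 <= mon n m i0)%O.
  have hin : mon n m 0 \in msupp (f * g) by rewrite mcoeff_msupp.
  rewrite -he0; apply: le_trans (msupp_le_mlead hin) _.
  by rewrite hnz //; apply: lem_add; apply: mlead_le_head.
have hi00 : i0 = 0%N.
  apply/eqP; apply: NNPP => /negP hne.
  have := mon_lt (m := m) n (i := i0); rewrite lt0n hne hi0 => /(_ isT) hlt.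
  by have := lt_le_trans hlt hle; rewrite ltxx.
rewrite hi00 in he0.
have hdf0 := mdeg_mlead_h (nz_in nf f0in) (hf f0in).
case: (mon_split he0 hdf0) => hf0e _.
have hy : mlead fs`_0 (oy n) = 0%N.
  have := congr1 (fun u : 'X_{1..n.+2} => u (oy n)) he0; rewrite /= mnmDE monE_y.
  by move/eqP; rewrite addn_eq0 => /andP [/eqP].
rewrite hy in hf0e; split => //.
rewrite ltnNge; apply/negP => hs1.
have hone : forall f', f' \in fs -> f' = fs`_0.
  move=> f' hf'; rewrite -(nth_index 0 hf').
  have : (index f' fs < size fs)%N by rewrite index_mem.
  move=> h1; suff -> : index f' fs = 0%N by [].
  by apply/eqP; rewrite -leqn0 -ltnS; apply: leq_trans h1 _; rewrite -ltnS.
have hW : subspace (fun v : S => exists h', v = fs`_0 * h').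
  split; first by exists 0; rewrite mulr0.
  - by move=> x y [h1 ->] [h2 ->]; exists (h1 + h2); rewrite mulrDr.
  - by move=> c x [h1 ->]; exists (c *: h1); rewrite scalerAr.
have [h' hh'] := kspan_min hW (fun v => fun hv => match hv with ex_intro f (ex_intro g (And3 h1 h2 h3)) => ex_intro _ g (eq_trans h3 (f_equal (fun z => z * g) (hone f h1))) end) HY.
have hh0 : h' != 0.
  apply/negP => /eqP h0; move: hh'; rewrite h0 mulr0 => /(congr1 (mcoeff (mon n m m))).
  by rewrite mcoeffX eqxx mcoeff0 => /eqP; rewrite oner_eq0.
have := congr1 (@mlead _ _) hh'; rewrite mleadXm mleadM_proper; last first.
  by rewrite mulf_neq0 // mleadc_eq0 // (nz_in nf f0in).
rewrite hf0e => /(congr1 (fun u : 'X_{1..n.+2} => u (ox n))); rewrite mnmDE !monE_x subnn subn0.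
move/eqP; rewrite eq_sym addn_eq0 => /andP [/eqP hd0 _].
by move: hd; rewrite hd0.
Qed.

End Side.

Section MainLemmas.
Variables (D : idomainType) (n : nat).
Local Notation RR := {mpoly D[n.+2]}.
Local Notation K := {fraction D}.
Local Notation SS := {mpoly K[n.+2]}.

Lemma JK_sub (J : RR -> Prop) i f : J f -> JK J i (extK (hcomp f i)).
Proof. by move=> hf; apply: kspan_sub; exists f. Qed.

Lemma extK0 : extK (0 : RR) = 0.
Proof. by rewrite /extK rmorph0. Qed.

Lemma JK_mul (I a b : RR -> Prop) d e : ideal_eq I (ideal_mul a b) -> is_ideal a ->
  is_mdeg a d -> is_mdeg b e -> ideal_eq (JK I (d + e)) (spmul (JK a d) (JK b e)).
Proof.
move=> hI ha hd he v; split.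
  move=> hv; apply: (kspan_min (kspan_subspace _) _ hv) => g [f [hf ->]].
  have hf' : ideal_mul a b f by apply/hI.
  have key : forall f, ideal_mul a b f -> forall r,
      spmul (JK a d) (JK b e) (extK (hcomp (r * f) (d + e))).
    move=> f0 hf0.
    case: (kspan_subspace (fun h => exists v0 w0, JK a d v0 /\ JK b e w0 /\ h = v0 * w0)) => [W0 WD WZ].
    apply: (gen_min (J := fun f => forall r,
      spmul (JK a d) (JK b e) (extK (hcomp (r * f) (d + e)))) _ _ hf0); last first.
      move=> q [x [y [hx [hy ->]]]] r.
      have hrx : a (r * x) by case: ha => [_ _ JM]; apply: JM.
      have L1 := mdeg_low hd hrx; have L2 := mdeg_low he hy.
      rewrite mulrA (hcompM_low L1 L2) extKM.
      apply: kspan_sub; exists (extK (hcomp (r * x) d)), (extK (hcomp y e)).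
      split; [exact: (JK_sub d hrx) | split; [exact: (JK_sub e hy) | by []]].
      split.
      - by move=> r; rewrite mulr0 hcomp0 extK0; apply: W0.
      - by move=> x y hx hy r; rewrite mulrDr hcompD extKD; apply: WD; [exact: hx | exact: hy].
      - by move=> r' x hx r; rewrite mulrA; apply: hx.
  by have := key f hf' 1; rewrite mul1r.
move=> hv; apply: (kspan_min (kspan_subspace _) _ hv) => g [v0 [w0 [hv0 [hw0 ->]]]].
apply: (kspan_mul2 (kspan_subspace _) _ hv0 hw0).
move=> g1 h1 [x [hx ->]] [y [hy ->]].
rewrite -extKM -hcompM_low; [|exact: (mdeg_low hd)|exact: (mdeg_low he)].
by apply: JK_sub; apply/hI; apply: ideal_mul_sub.
Qed.

Lemma lem_eqdeg (u v : 'X_{1..n.+2}) : (v <= u)%MM -> mdeg v = mdeg u -> v = u.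
Proof.
move=> hl he; rewrite -(submK hl); have := congr1 mdeg (submK hl).
rewrite mdegD he -[X in _ = X]add0n => /addIn /eqP; rewrite mdeg_eq0 => /eqP ->.
by rewrite add0m.
Qed.

Lemma JKI_supp (P : RR -> Prop) m :
  (forall p, P p -> exists i, (i <= m)%N /\ p = 'X_[mon n m i]) ->
  forall v, JK (gen_ideal P) m v -> forall u, u \in msupp v ->
  exists i, [/\ (i <= m)%N, P 'X_[mon n m i] & u = mon n m i].
Proof.
move=> hP v hv.
have hW : subspace (fun v : SS => forall u, u \in msupp v ->
    exists i, [/\ (i <= m)%N, P 'X_[mon n m i] & u = mon n m i]).
  split.
  - by move=> u; rewrite msupp0.
  - by move=> x y hx hy u /msuppD_le; rewrite mem_cat => /orP [/hx|/hy].
  - by move=> c x hx u /msuppZ_le /hx.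
apply: (kspan_min hW _ hv) => g [f [hf ->]] u.
rewrite mcoeff_msupp extK_coef tofrac_eq0 mcoeff_hcomp.
case: ifP => [/eqP hdu hfu|_]; last by rewrite eqxx.
have : u \in msupp f by rewrite mcoeff_msupp.
move/(I_char1 hP hf) => [i [[hi hPi] hl]]; exists i; split => //.
by apply/esym/lem_eqdeg => //; rewrite hdu mdeg_mon.
Qed.

End MainLemmas.

Lemma elem_facts (K : fieldType) n d m (fs : seq {mpoly K[n.+2]}) :
  sdec fs -> nzs fs -> (forall f, f \in fs -> f \is d.-homog) -> mlead fs`_0 = mon n d 0 ->
  (forall f, f \in fs -> exists v i, (mlead f + v)%MM = mon n m i) ->
  let as_ := [seq mlead f (oy n) | f <- fs] in
  [/\ 'X_[inm fs`_0] = varX K n ^+ d,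
      forall j, (j.+1 < size fs)%N -> lexlt (inm fs`_j.+1) (inm fs`_j) &
      [/\ size as_ = size fs, nth 0%N as_ 0 = 0%N,
      forall j, (1 <= j < size fs)%N -> (1 <= nth 0%N as_ j <= d)%N &
      forall j, (j < size fs)%N -> 'X_[inm fs`_j] = varX K n ^+ (d - nth 0%N as_ j) * varY K n ^+ nth 0%N as_ j]].
Proof.
move=> sf nf hh h0 hpair as_.
have hin : forall j, (j < size fs)%N -> fs`_j \in fs by move=> j hj; apply: mem_nth.
have hinm : forall j, (j < size fs)%N -> inm fs`_j = mlead fs`_j.
  by move=> j hj; apply: (inm_homog (d := d)); apply: hh; apply: hin.
have hdeg : forall j, (j < size fs)%N -> mdeg (mlead fs`_j) = d.
  move=> j hj; apply: mdeg_mlead_h; [exact: (nz_in nf (hin _ hj)) | exact: hh (hin _ hj)].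
have hmon : forall j, (j < size fs)%N -> mlead fs`_j = mon n d (mlead fs`_j (oy n)) /\ (mlead fs`_j (oy n) <= d)%N.
  move=> j hj; case: (hpair _ (hin _ hj)) => v [i hvi].
  exact: (mon_split hvi (hdeg _ hj)).
have has : forall j, (j < size fs)%N -> nth 0%N as_ j = mlead fs`_j (oy n).
  by move=> j hj; rewrite /as_ (nth_map 0).
have hlt : forall i j, (i < j < size fs)%N -> (mlead fs`_j < mlead fs`_i)%O.
  move=> i j /andP [hij hj].
  have tr : transitive (fun x y : {mpoly K[n.+2]} => (mlead y < mlead x)%O).
    by move=> x y z h1 h2; apply: lt_trans h2 h1.
  have := sorted_ltn_nth tr 0 sf; move=> H; apply: (H i j) => //; rewrite inE //.
  exact: ltn_trans hij hj.
have hinm0 : inm fs`_0 = mlead fs`_0.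
  case: (ltnP 0 (size fs)) => [h|]; first exact: hinm.
  rewrite leqn0 => /eqP /size0nil ->; by rewrite /= /inm msupp0 mlead0.
split.
- by rewrite hinm0 h0 XmonE subn0 expr0 mulr1.
- move=> j hj; rewrite !hinm // ?(ltnW hj) // lexltE; last by rewrite !hdeg // ltnW.
  by apply: hlt; rewrite ltnSn.
split.
- by rewrite size_map.
- case: (ltnP 0 (size fs)) => [h|]; last by rewrite leqn0 => /eqP /size0nil; rewrite /as_ => ->.
  by rewrite has // h0 monE_y.
- move=> j /andP [hj1 hj]; rewrite has //; case: (hmon _ hj) => he hle; rewrite hle andbT lt0n.
  apply/negP => /eqP ha0; rewrite ha0 -h0 in he.
  by have := hlt 0%N j; rewrite hj1 hj he ltxx => /(_ isT).
- by move=> j hj; rewrite hinm // has //; case: (hmon _ hj) => he _; rewrite {1}he XmonE.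
Qed.

Unset Implicit Arguments.
Theorem lemma3p1 (D : idomainType) (n : nat)
  (* standing assumption: I(R) is a BF-monoid, R = D[X_1..X_N], N = n+2 *)
  (HBF : BF_ideals {mpoly D[n.+2]})
  (m : nat) (hm : (0 < m)%N)
  (Nset : {mpoly D[n.+2]} -> Prop)
  (hNset : forall p, Nset p ->
     exists i, (i <= m)%N /\ p = varX D n ^+ (m - i) * varY D n ^+ i)
  (a b : {mpoly D[n.+2]} -> Prop)
  (ha : nonzero_ideal a) (ha1 : ~ ideal_eq a (@unit_ideal _))
  (hb : nonzero_ideal b) (hb1 : ~ ideal_eq b (@unit_ideal _))
  (hI : ideal_eq
          (gen_ideal (fun p => p = varX D n ^+ m \/ p = varY D n ^+ m \/ Nset p))
          (ideal_mul a b))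
  (d e r s : nat)
  (hd : is_mdeg a d) (he : is_mdeg b e)
  (hr : is_dim (JK a d) r) (hs : is_dim (JK b e) s) :
  let I := gen_ideal (fun p => p = varX D n ^+ m \/ p = varY D n ^+ m \/ Nset p) in
  (* (i) *)
  (m = d + e /\ ideal_eq (JK I m) (spmul (JK a d) (JK b e)))%N /\
  (* (ii) *)
  (1 <= d /\ 1 <= e)%N /\
  (* (iii), (iv), (v) *)
  exists (fs gs : seq {mpoly {fraction D}[n.+2]}) (as_ bs : seq nat),
    [/\ [/\ (2 <= r)%N, size fs = r, is_basis (JK a d) fs,
            'X_[inm fs`_0] = varX {fraction D} n ^+ d &
            forall j, (j.+1 < r)%N -> lexlt (inm fs`_j.+1) (inm fs`_j)],
        [/\ (2 <= s)%N, size gs = s, is_basis (JK b e) gs,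
            'X_[inm gs`_0] = varX {fraction D} n ^+ e &
            forall k, (k.+1 < s)%N -> lexlt (inm gs`_k.+1) (inm gs`_k)],
        [/\ size as_ = r, nth 0%N as_ 0 = 0%N,
            forall j, (1 <= j < r)%N -> (1 <= nth 0%N as_ j <= d)%N &
            forall j, (j < r)%N ->
              'X_[inm fs`_j] = varX {fraction D} n ^+ (d - nth 0%N as_ j) * varY {fraction D} n ^+ nth 0%N as_ j],
        [/\ size bs = s, nth 0%N bs 0 = 0%N,
            forall k, (1 <= k < s)%N -> (1 <= nth 0%N bs k <= e)%N &
            forall k, (k < s)%N ->
              'X_[inm gs`_k] = varX {fraction D} n ^+ (e - nth 0%N bs k) * varY {fraction D} n ^+ nth 0%N bs k] &
        forall j k, (j < r)%N -> (k < s)%N ->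
          let c := (nth 0%N as_ j + nth 0%N bs k)%N in
          let mon := varX D n ^+ (m - c) * varY D n ^+ c in
          mon = varX D n ^+ m \/ mon = varY D n ^+ m \/ Nset mon].
Proof.
move=> I.
have hP : forall p, (p = varX D n ^+ m \/ p = varY D n ^+ m \/ Nset p) ->
    exists i, (i <= m)%N /\ p = 'X_[mon n m i].
  move=> p [->|[->|/hNset [i [hi ->]]]].
  - by exists 0%N; rewrite XmonE subn0 expr0 mulr1.
  - by exists m; rewrite XmonE subnn expr0 mul1r.
  - by exists i; rewrite XmonE.
have hX : ('X_[mon n m 0] : {mpoly D[n.+2]}) = varX D n ^+ m \/ 'X_[mon n m 0] = varY D n ^+ m \/ Nset 'X_[mon n m 0].
  by left; rewrite XmonE subn0 expr0 mulr1.
have hY : ('X_[mon n m m] : {mpoly D[n.+2]}) = varX D n ^+ m \/ 'X_[mon n m m] = varY D n ^+ m \/ Nset 'X_[mon n m m].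
  by right; left; rewrite XmonE subnn expr0 mul1r.
have hIe : ideal_eq I (ideal_mul a b) := hI.
have hI2 : ideal_eq I (ideal_mul b a).
  by move=> x; split => h; [apply/ideal_mulC/hIe | apply/hIe/ideal_mulC].
have haI := proj1 ha; have hbI := proj1 hb.
have hXne : forall (R : idomainType) (u : 'X_{1..n.+2}), ('X_[u] : {mpoly R[n.+2]}) != 0.
  move=> R u; apply/negP => /eqP /(congr1 (mcoeff u)).
  by rewrite mcoeffX eqxx mcoeff0 => /eqP; rewrite oner_eq0.
have lowI : forall f, I f -> low f m.
  move=> f hf; apply: (gen_min (J := fun f => low f m) _ _ hf).
    split; [by move=> u _; rewrite mcoeff0 | by move=> x y; apply: lowD | by move=> r0 x; apply: lowMl].
  move=> g /hP [i [hi ->]] u hu; rewrite mcoeffX; case: eqP => // he0.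
  by rewrite -he0 mdeg_mon // ltnn in hu.
have mdI : is_mdeg I m.
  apply: is_mdegP => //; exists 'X_[mon n m 0]; split; first exact: gen_sub.
  rewrite hcomp_homog_eq; first exact: hXne.
  by rewrite dhomogX; apply/eqP; apply: mdeg_mon.
have mdAB : is_mdeg (ideal_mul a b) (d + e).
  apply: is_mdegP.
    move=> f hf; apply: (gen_min (J := fun f => low f (d + e)) _ _ hf).
      split; [by move=> u _; rewrite mcoeff0 | by move=> x y; apply: lowD | by move=> r0 x; apply: lowMl].
    by move=> g [x [y [hx [hy ->]]]]; apply: lowM; [exact: mdeg_low hd _ hx | exact: mdeg_low he _ hy].
  case: hd => [[f [hf hf0 hmf]] _]; case: he => [[g [hg hg0 hmg]] _].
  exists (f * g); split; first exact: ideal_mul_sub.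
  move/mindegE: hmf => [lf hcf]; move/mindegE: hmg => [lg hcg].
  by rewrite hcompM_low // mulf_neq0.
have hmde : m = (d + e)%N := is_mdeg_uniq (is_mdeg_eq hIe mdI) mdAB.
have hJK : ideal_eq (JK I m) (spmul (JK a d) (JK b e)) by rewrite hmde; exact: JK_mul.
have coef0 : forall f : {mpoly D[n.+2]}, mindeg f 0 -> f@_0%MM != 0.
  move=> f /mindegE [_ hc]; apply: contraNneq hc => h0; apply/eqP/mpolyP => u.
  rewrite mcoeff_hcomp mcoeff0; case: eqP => // /eqP; rewrite mdeg_eq0 => /eqP ->; exact: h0.
have hd1 : (1 <= d)%N.
  rewrite lt0n; apply/negP => /eqP hd0; case: hd => [[f [hf hf0 hmf]] _]; rewrite hd0 in hmf.
  exact: (naka hP haI hbI ha1 hIe hX hf (coef0 _ hmf)).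
have he1 : (1 <= e)%N.
  rewrite lt0n; apply/negP => /eqP he0; case: he => [[f [hf hf0 hmf]] _]; rewrite he0 in hmf.
  exact: (naka hP hbI haI hb1 hI2 hX hf (coef0 _ hmf)).
pose Q := fun i => ('X_[mon n m i] : {mpoly D[n.+2]}) = varX D n ^+ m \/ 'X_[mon n m i] = varY D n ^+ m \/ Nset 'X_[mon n m i].
case: (good_basis hr (fun x hx => kspan_closed hx)) => fs [hfsz [hfin hfind hfsp] sf nf].
case: (good_basis hs (fun x hx => kspan_closed hx)) => gs [hgsz [hgin hgind hgsp] sg ng].
have hfh : forall f, f \in fs -> f \is d.-homog by move=> f /hfin /JK_homog.
have hgh : forall g, g \in gs -> g \is e.-homog by move=> g /hgin /JK_homog.
have hJKI : forall i, (i <= m)%N -> Q i -> JK I m 'X_[mon n m i].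
  move=> i hi hQ; have := JK_sub m (gen_sub hQ : I 'X_[mon n m i]).
  rewrite hcomp_homog_eq ?extKX //; by rewrite dhomogX; apply/eqP; apply: mdeg_mon.
have toProd : forall h, JK I m h -> kspan (Prod fs gs) h /\ kspan (Prod gs fs) h.
  move=> h /hJK hh; split; apply: (kspan_min (kspan_subspace _) _ hh) => g0 [v [w [hv [hw ->]]]].
    have hv' : kspan (fun x => x \in fs) v by apply: (lspan_kspanW (bs := fs)) => //; apply: hfsp.
    have hw' : kspan (fun x => x \in gs) w by apply: (lspan_kspanW (bs := gs)) => //; apply: hgsp.
    apply: (kspan_mul2 (kspan_subspace _) _ hv' hw') => f g hf hg; apply: kspan_sub.
    by exists f, g; split.
  have hv' : kspan (fun x => x \in fs) v by apply: (lspan_kspanW (bs := fs)) => //; apply: hfsp.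
  have hw' : kspan (fun x => x \in gs) w by apply: (lspan_kspanW (bs := gs)) => //; apply: hgsp.
  apply: (kspan_mul2 (kspan_subspace _) _ hv' hw') => f g hf hg; apply: kspan_sub.
  by exists g, f; split => //; rewrite mulrC.
have HPair : forall f g, f \in fs -> g \in gs ->
    exists i, [/\ (i <= m)%N, Q i & (mlead f + mlead g)%MM = mon n m i].
  move=> f g hf hg.
  have hfg : JK I m (f * g).
    by apply/hJK; apply: kspan_sub; exists f, g; split; [exact: hfin | split; [exact: hgin | by []]].
  have hne : f * g != 0 by rewrite mulf_neq0 // ?(nz_in nf hf) ?(nz_in ng hg).
  case: (JKI_supp hP hfg (mlead_supp hne)) => i [hi hQ he0]; exists i; split => //.
  rewrite -he0; apply/esym/mleadM_proper; rewrite mulf_neq0 // mleadc_eq0.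
    exact: (nz_in nf hf).
  exact: (nz_in ng hg).
have HPair' : forall g f, g \in gs -> f \in fs ->
    exists i, [/\ (i <= m)%N, Q i & (mlead g + mlead f)%MM = mon n m i].
  by move=> g f hg hf; case: (HPair f g hf hg) => i [h1 h2 h3]; exists i; rewrite addmC.
have hX0 := toProd _ (hJKI 0%N (leq0n m) hX).
have hYm := toProd _ (hJKI m (leqnn m) hY).
have [hfs2 hf0] := side (Q := Q) sf nf sg ng hfh hd1 HPair hX0.1 hYm.1.
have [hgs2 hg0] := side (Q := Q) sg ng sf nf hgh he1 HPair' hX0.2 hYm.2.
have f0in : fs`_0 \in fs by apply: mem_nth; apply: leq_trans hfs2.
have g0in : gs`_0 \in gs by apply: mem_nth; apply: leq_trans hgs2.
have hpf : forall f, f \in fs -> exists v i, (mlead f + v)%MM = mon n m i.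
  by move=> f hf; case: (HPair f _ hf g0in) => i [_ _ h]; exists (mlead gs`_0), i.
have hpg : forall g, g \in gs -> exists v i, (mlead g + v)%MM = mon n m i.
  by move=> g hg; case: (HPair' g _ hg f0in) => i [_ _ h]; exists (mlead fs`_0), i.
case: (elem_facts sf nf hfh hf0 hpf) => EF1 EF2 [EF3 EF4 EF5 EF6].
case: (elem_facts sg ng hgh hg0 hpg) => EG1 EG2 [EG3 EG4 EG5 EG6].
split; first by split.
split; first by split.
exists fs, gs, [seq mlead f (oy n) | f <- fs], [seq mlead g (oy n) | g <- gs].
split.
- split; [by rewrite -hfsz | exact: hfsz | by split | exact: EF1 | by rewrite -hfsz].
- split; [by rewrite -hgsz | exact: hgsz | by split | exact: EG1 | by rewrite -hgsz].
- by split; rewrite -?hfsz.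
- by split; rewrite -?hgsz.
move=> j k hj hk c mn.
have hj' : (j < size fs)%N by rewrite hfsz.
have hk' : (k < size gs)%N by rewrite hgsz.
case: (HPair _ _ (mem_nth 0 hj') (mem_nth 0 hk')) => i [hi hQ he0].
have hic : i = c.
  have := congr1 (fun u : 'X_{1..n.+2} => u (oy n)) he0; rewrite /= mnmDE monE_y => <-.
  by rewrite /c !(nth_map 0).
by rewrite /mn -XmonE -hic.
Qed.
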